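(* Fix $p\in(0,1)$. Under the Alternating Path Randomized Design, let $\mathcal{P}_i=(v_{i,1},\dots,v_{i,k(i)+1})$ be a path component (not a cycle), write $k=k(i)$ and $y_j=Y_{v_{i,j},v_{i,j+1}}$. Then $\mathrm{Var}(\hat\Gamma_i)\le\tilde\sigma_i^2$, where \[\tilde\sigma_i^2:=\Big(\frac1p+1\Big)\sum_{j=1}^{k}y_j^2+\sum_{j=2}^{k-1}y_j^2+2\sum_{\substack{1\le j\le k-2\\ j+2\le q\le k}}p^{q-j-1}y_jy_q.\] Moreover, with $\mathbb{P}(W_{i,j}=1)=p/(p+1)$ and $\mathbb{P}(W_{i,j}=1,W_{i,q}=1)=(p^2-(-p)^{q-j+1})/(p+1)^2$, the statistic \[\hat\sigma_i^2:=\Big(\frac1p+1\Big)\sum_{j=1}^{k}\frac{W_{i,j}y_j^2}{\mathbb{P}(W_{i,j}=1)}+\sum_{j=2}^{k-1}\frac{W_{i,j}y_j^2}{\mathbb{P}(W_{i,j}=1)}+2\sum_{\substack{1\le j\le k-2\\ j+2\le q\le k}}p^{q-j-1}\frac{y_jy_q\,W_{i,j}W_{i,q}}{\mathbb{P}(W_{i,j}=1,W_{i,q}=1)}\] satisfies $\mathbb{E}[\hat\sigma_i^2]=\tilde\sigma_i^2$.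
   Context: Setting: $2N$ agents; $\mathbb{M}^t,\mathbb{M}^c$ are one-to-one matchings (sets of unordered pairs of distinct agents, each agent in at most one pair); each pair $(a,b)$ has a fixed real potential outcome $Y_{a,b}$. The disagreement set $\triangle\mathbb{M}^{(t,c)}=(\mathbb{M}^t\cup\mathbb{M}^c)\setminus(\mathbb{M}^t\cap\mathbb{M}^c)$, viewed as a graph, has connected components, each an alternating path or cycle: a sequence $(v_{i,1},\dots,v_{i,k(i)+1})$ whose consecutive pairs $e_{i,j}=(v_{i,j},v_{i,j+1})$ are its edges, alternating between $\triangle\mathbb{M}^{(t,c)}_t=\triangle\mathbb{M}^{(t,c)}\cap\mathbb{M}^t$ and $\triangle\mathbb{M}^{(t,c)}_c=\triangle\mathbb{M}^{(t,c)}\cap\mathbb{M}^c$; a path if $v_{i,1}\ne v_{i,k(i)+1}$. Alternating Path Randomized Design with parameter $p$ on a path component: $\mathbb{P}(W_{i,1}=1)=p/(1+p)$ and for $2\le j\le k(i)$, conditionally on $W_{i,1},\dots,W_{i,j-1}$, $W_{i,j}=1$ with probability $p$ if $W_{i,j-1}=0$ and $W_{i,j}=0$ if $W_{i,j-1}=1$ (components are randomized independently). Path-level estimator $\hat\Gamma_i=\sum_{j:\,e_{i,j}\in\triangle\mathbb{M}^{(t,c)}_t}\frac{W_{i,j}Y_{e_{i,j}}}{\mathbb{P}(W_{i,j}=1)}-\sum_{j:\,e_{i,j}\in\triangle\mathbb{M}^{(t,c)}_c}\frac{W_{i,j}Y_{e_{i,j}}}{\mathbb{P}(W_{i,j}=1)}$.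 Note $\hat\sigma_i^2$ only involves outcomes of realized edges ($W=1$). *)

(* Defs.v *)
From mathcomp Require Import all_boot all_order all_algebra.
Unset Printing Implicit Defensive.
Import Order.TTheory GRing.Theory Num.Theory.
Local Open Scope ring_scope.

Section APRD.
Variable R : realFieldType.
Variable p : R.
Variable k : nat.

(* Treatment indicator W_{i,j} of the j-th edge of the path, 1-based (1 <= j <= k). *)
Definition Wj (w : k.-tuple bool) (j : nat) : bool := nth false w j.-1.

Definition first_law (b : bool) : R := if b then p / (1 + p) else 1 - p / (1 + p).

(* Conditional law of W_{i,j} given W_{i,j-1} = a *)
Definition trans_law (a b : bool) : R :=
  if a then (if b then 0 else 1) else (if b then p else 1 - p).

Definition aprd_pmf (w : k.-tuple bool) : R :=
  first_law (Wj w 1) * \prod_(2 <= j < k.+1) trans_law (Wj w j.-1) (Wj w j).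

Definition Exp (f : k.-tuple bool -> R) : R :=
  \sum_(w : k.-tuple bool) aprd_pmf w * f w.

Definition Var (f : k.-tuple bool -> R) : R :=
  Exp (fun w => (f w - Exp f) ^+ 2).

Definition Pr1 (j : nat) : R := Exp (fun w => (Wj w j)%:R).
Definition Pr2 (j q : nat) : R := Exp (fun w => (Wj w j && Wj w q)%:R).

(* Path-level estimator; inT j = true iff edge e_{i,j} is in the treatment
   matching (i.e. in triangle M_t), y j = Y_{e_{i,j}}. *)
Definition Gamma_hat (inT : nat -> bool) (y : nat -> R) (w : k.-tuple bool) : R :=
  \sum_(1 <= j < k.+1)
     (if inT j then 1 else -1) * ((Wj w j)%:R * y j / Pr1 j).

Definition sigma_tilde (y : nat -> R) : R :=
  (p^-1 + 1) * (\sum_(1 <= j < k.+1) y j ^+ 2)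
  + (\sum_(2 <= j < k) y j ^+ 2)
  + 2 * (\sum_(1 <= j < k.-1) \sum_(j.+2 <= q < k.+1)
           p ^+ (q - j - 1) * y j * y q).

Definition sigma_hat (y : nat -> R) (w : k.-tuple bool) : R :=
  (p^-1 + 1) * (\sum_(1 <= j < k.+1) (Wj w j)%:R * y j ^+ 2 / Pr1 j)
  + (\sum_(2 <= j < k) (Wj w j)%:R * y j ^+ 2 / Pr1 j)
  + 2 * (\sum_(1 <= j < k.-1) \sum_(j.+2 <= q < k.+1)
           p ^+ (q - j - 1) * (y j * y q * ((Wj w j)%:R * (Wj w q)%:R) / Pr2 j q)).

End APRD.

(* Main.v *)
Require Import Defs.
From mathcomp Require Import all_boot all_order all_algebra.
From mathcomp Require Import ring lra zify.
Import Order.TTheory GRing.Theory Num.Theory.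
Local Open Scope ring_scope.
Set Implicit Arguments.
Unset Strict Implicit.

Lemma sum_tuple_cons (R : realFieldType) n (G : seq bool -> R) :
  \sum_(s : n.+1.-tuple bool) G s = \sum_(c : bool) \sum_(t : n.-tuple bool) G (c :: t).
Proof.
rewrite pair_big /=.
rewrite (reindex (fun ct : bool * n.-tuple bool => cons_tuple ct.1 ct.2)) /=.
  by apply: eq_bigr => [[c t]] _.
exists (fun s : n.+1.-tuple bool => (thead s, behead_tuple s)).
  by move=> [c t] _ /=; congr (_, _); apply: val_inj.
move=> s _ /=; case: s => [[|c t] //= Hs]; apply: val_inj => //.
Qed.

Section Chain.
Variable R : realFieldType.
Variable p : R.
Hypothesis hp : 0 < p.

Definition T := @trans_law R p.
Fixpoint wt (b : bool) (s : seq bool) : R :=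
  if s is c :: s' then T b c * wt c s' else 1.

Definition M n b (F : seq bool -> R) := \sum_(t : n.-tuple bool) wt b t * F t.

Lemma M_cons n b F : M n.+1 b F = \sum_c T b c * M n c (fun t => F (c :: t)).
Proof.
rewrite /M (@sum_tuple_cons _ _ (fun s => wt b s * F s)); apply: eq_bigr => c _ /=.
rewrite mulr_sumr; apply: eq_bigr => t _; by rewrite mulrA.
Qed.

Lemma M_const n b a : M n b (fun _ => a) = a.
Proof.
elim: n b => [|n IH] b.
  rewrite /M (big_pred1 [tuple]) /= ?mul1r // => t; symmetry; apply/eqP; exact: tuple0.
rewrite M_cons; under eq_bigr do rewrite IH.
rewrite big_bool /T /trans_law; case: b => /=; ring.
Qed.

Lemma p1_neq0 : 1 + p != 0.
Proof. apply: lt0r_neq0; by rewrite ?addr_gt0. Qed.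
Lemma p_neq0 : p != 0.
Proof. apply: lt0r_neq0; by rewrite ?addr_gt0. Qed.

Definition pi := p / (1 + p).
Definition f m (b : bool) := pi + (b%:R - pi) * (- p) ^+ m.

Lemma f_step m b : \sum_c T b c * f m c = f m.+1 b.
Proof.
have h1 := p1_neq0.
rewrite big_bool /f /T /pi exprS; set x := (- p) ^+ m.
by case: b => /=; field.
Qed.

Lemma M1 n m b : (m < n)%N -> M n b (fun s => (nth false s m)%:R) = f m.+1 b.
Proof.
elim: n m b => [|n IH] m b //.
rewrite M_cons; case: m => [|m] Hm /=.
  under eq_bigr do rewrite M_const.
  have h1 := p1_neq0.
  rewrite big_bool /f /T /pi; by case: b => /=; field.
under eq_bigr => c _ do rewrite (IH m c Hm).
exact: f_step.
Qed.

Lemma M2 n m r b : (m < r)%N -> (r < n)%N ->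
  M n b (fun s => (nth false s m && nth false s r)%:R) = f m.+1 b * f (r - m) true.
Proof.
elim: n m r b => [|n IH] m r b //.
case: r => [|r] //.
rewrite M_cons; case: m => [|m] Hm Hr /=.
  rewrite big_bool /= M1 // M_const subn0.
  have h1 := p1_neq0.
  rewrite /f /T /pi; by case: b => /=; field.
under eq_bigr => c _ do rewrite (IH m r c Hm Hr).
rewrite subSS; under eq_bigr do rewrite mulrA.
by rewrite -mulr_suml f_step.
Qed.
End Chain.
Section Expect.
Variable R : realFieldType.
Variable p : R.
Hypothesis hp : 0 < p.
Variable k : nat.
Hypothesis hk : (0 < k)%N.

Lemma prod_wt t b : \prod_(2 <= j < (size t).+2)
   trans_law R p (nth false (b :: t) j.-1.-1) (nth false (b :: t) j.-1) = wt p b t.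
Proof.
elim: t b => [|c t IH] b /=; first by rewrite big_geq.
rewrite big_nat_recl //=; congr (_ * _); rewrite -IH.
by apply: eq_big_nat => j /andP[hj _]; case: j hj => [|[|j]].
Qed.

Lemma fl_stat b : \sum_a first_law R p a * T p a b = first_law R p b.
Proof.
have h1 := p1_neq0 hp.
by rewrite big_bool /T; case: b => /=; field.
Qed.

Lemma ExpE (G : seq bool -> R) :
  Exp R p k (fun w : k.-tuple bool => G w) = \sum_a first_law R p a * M p k a G.
Proof.
case: k hk => // n _.
rewrite /Exp (@sum_tuple_cons _ _ (fun s => (first_law R p (nth false s 0) *
   \prod_(2 <= j < n.+2) trans_law R p (nth false s j.-1.-1) (nth false s j.-1)) * G s)).
rewrite [RHS](eq_bigr (fun a => \sum_c first_law R p a * (T p a c * M p n c (fun t => G (c :: t))))); last first.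
  by move=> a _; rewrite M_cons mulr_sumr.
rewrite [RHS]exchange_big /=; apply: eq_bigr => b _.
rewrite [RHS](eq_bigr (fun a => first_law R p a * T p a b * M p n b (fun t => G (b :: t)))); last first.
  by move=> a _; rewrite mulrA.
rewrite -mulr_suml fl_stat /M mulr_sumr; apply: eq_bigr => t _.
by have := prod_wt t b; rewrite size_tuple => ->; rewrite mulrA.
Qed.

End Expect.
Section Expect2.
Variable R : realFieldType.
Variable p : R.
Hypothesis hp : 0 < p.
Variable k : nat.
Hypothesis hk : (0 < k)%N.

Notation E := (Exp R p k).

Lemma Exp_ext f g : (forall w, f w = g w) -> E f = E g.
Proof. by move=> h; apply: eq_bigr => w _; rewrite h. Qed.

Lemma ExpD f g : E (fun w => f w + g w) = E f + E g.
Proof. by rewrite /Exp -big_split; apply: eq_bigr => w _; rewrite mulrDr. Qed.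

Lemma ExpZ a f : E (fun w => a * f w) = a * E f.
Proof. by rewrite /Exp mulr_sumr; apply: eq_bigr => w _; rewrite mulrCA. Qed.

Lemma ExpN f : E (fun w => - f w) = - E f.
Proof. by rewrite /Exp -sumrN; apply: eq_bigr => w _; rewrite mulrN. Qed.

Lemma Exp_sum (I : Type) (r : seq I) (P : pred I) (F : I -> k.-tuple bool -> R) :
  E (fun w => \sum_(i <- r | P i) F i w) = \sum_(i <- r | P i) E (F i).
Proof.
rewrite /Exp (eq_bigr (fun w => \sum_(i <- r | P i) aprd_pmf R p k w * F i w)).
  by rewrite exchange_big.
by move=> w _; rewrite mulr_sumr.
Qed.

Lemma Exp1 : E (fun _ => 1) = 1.
Proof.
rewrite (ExpE hp hk (fun _ => 1)).
under eq_bigr do rewrite M_const mulr1.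
have h1 := p1_neq0 hp.
by rewrite big_bool /=; field.
Qed.

Lemma fl_f m : \sum_a first_law R p a * f p m a = pi p.
Proof.
have h1 := p1_neq0 hp.
by rewrite big_bool /f /pi /=; field.
Qed.

Lemma Pr1E j : (1 <= j <= k)%N -> Pr1 R p k j = pi p.
Proof.
move=> /andP[h1 h2].
rewrite /Pr1 /Wj (ExpE hp hk (fun s => (nth false s j.-1)%:R)).
under eq_bigr do rewrite M1 ?prednK //.
exact: fl_f.
Qed.


Lemma natr_and (b1 b2 : bool) : (b1%:R * b2%:R : R) = (b1 && b2)%:R.
Proof. by case: b1; case: b2; rewrite /= ?mul1r ?mul0r. Qed.

Lemma Exp_cov (X Y : k.-tuple bool -> R) a :
  E (fun w => (X w - a) * (Y w - a)) = E (fun w => X w * Y w) - a * E Y - a * E X + a ^+ 2.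
Proof.
rewrite (@Exp_ext _ (fun w => X w * Y w + (- (a * Y w) + (- (a * X w) + a ^+ 2 * 1)))); last first.
  by move=> w; ring.
by rewrite !ExpD !ExpN !ExpZ Exp1; ring.
Qed.

Lemma Pr2E j q : (1 <= j)%N -> (j < q)%N -> (q <= k)%N ->
  Pr2 R p k j q = pi p * f p (q - j) true.
Proof.
move=> h1 h2 h3.
rewrite /Pr2 /Wj (ExpE hp hk (fun s => (nth false s j.-1 && nth false s q.-1)%:R)).
have hm : (j.-1 < q.-1)%N by lia.
have hr : (q.-1 < k)%N by lia.
under eq_bigr => a _ do rewrite (M2 hp _ hm hr) prednK //.
have -> : (q.-1 - j.-1 = q - j)%N by lia.
under eq_bigr do rewrite mulrA.
by rewrite -mulr_suml fl_f.
Qed.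

Lemma CovE j q : (1 <= j)%N -> (j <= q)%N -> (q <= k)%N ->
  E (fun w => ((Wj k w j)%:R - pi p) * ((Wj k w q)%:R - pi p)) =
  pi p * (1 - pi p) * (- p) ^+ (q - j).
Proof.
move=> h1 h2 h3.
rewrite Exp_cov.
under Exp_ext do rewrite natr_and.
rewrite -/(Pr2 R p k j q) -/(Pr1 R p k j) -/(Pr1 R p k q) !Pr1E; try lia.
have hjk : (j <= k)%N by lia.
case: (ltngtP j q) h2 => // [hjq|<-] _.
  by rewrite Pr2E // /f /=; ring.
rewrite /Pr2 (@Exp_ext _ (fun w => (Wj k w j)%:R)); last by move=> w; rewrite andbb.
rewrite -/(Pr1 R p k j) Pr1E; last lia.
by rewrite subnn expr0; ring.
Qed.

End Expect2.
Section Alg.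
Variable R : realFieldType.
Variable p : R.
Variable y : nat -> R.

Definition Tn n := \sum_(1 <= j < n.-1) \sum_(j.+2 <= q < n.+1) p ^+ (q - j - 1) * y j * y q.

Lemma Tn_step n : (1 <= n)%N ->
  Tn n.+1 = Tn n + \sum_(1 <= j < n) p ^+ (n.+1 - j - 1) * y j * y n.+1.
Proof.
move=> hn; rewrite /Tn /=.
rewrite (@eq_big_nat _ _ _ 1 n _ (fun j => \sum_(j.+2 <= q < n.+1) p ^+ (q - j - 1) * y j * y q
    + p ^+ (n.+1 - j - 1) * y j * y n.+1)); last first.
  by move=> j /andP[_ hj]; rewrite big_nat_recr.
rewrite big_split /=; congr (_ + _).
case: n hn => [|n] // _ /=.
case: n => [|n]; first by rewrite !big_geq.
by rewrite big_nat_recr //= [X in _ + X]big_geq // addr0.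
Qed.

Lemma adj_ineq n : (1 <= n)%N ->
  2 * \sum_(1 <= j < n) y j * y j.+1 <=
  \sum_(1 <= j < n.+1) y j ^+ 2 + \sum_(2 <= j < n) y j ^+ 2.
Proof.
case: n => [|n] // _.
case: n => [|n].
  rewrite [X in 2 * X]big_geq // [X in _ + X]big_geq // mulr0 addr0 big_nat1; exact: sqr_ge0.
have h1 : 2 * \sum_(1 <= j < n.+2) y j * y j.+1 <=
   \sum_(1 <= j < n.+2) y j ^+ 2 + \sum_(1 <= j < n.+2) y j.+1 ^+ 2.
  rewrite -big_split mulr_sumr /=; apply: ler_sum => j _.
  have := sqr_ge0 (y j - y j.+1); rewrite sqrrB; lra.
apply: (le_trans h1).
have e1 : \sum_(1 <= j < n.+3) y j ^+ 2 = \sum_(1 <= j < n.+2) y j ^+ 2 + y n.+2 ^+ 2.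
  by rewrite big_nat_recr.
have e2 : \sum_(1 <= j < n.+2) y j.+1 ^+ 2 = \sum_(2 <= j < n.+2) y j ^+ 2 + y n.+2 ^+ 2.
  by rewrite -big_nat_recr // big_add1.
rewrite e1 e2; lra.
Qed.
End Alg.
Section Var.
Variable R : realFieldType.
Variable p : R.
Hypothesis hp : 0 < p.
Hypothesis hp1 : p < 1.
Variable k : nat.
Hypothesis hk : (0 < k)%N.
Variable inT : nat -> bool.
Variable y : nat -> R.
Hypothesis halt : forall j : nat, (1 <= j < k)%N -> inT j.+1 = ~~ inT j.

Notation E := (Exp R p k).
Definition s j : R := if inT j then 1 else -1.

Lemma sign_shift d j : (1 <= j)%N -> (j + d <= k)%N -> s (j + d) = (-1) ^+ d * s j.
Proof.
elim: d => [|d IH] hj hjd; first by rewrite addn0 expr0 mul1r.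
have hjd' : (j + d <= k)%N by lia.
have IH' := IH hj hjd'.
rewrite /s in IH' *; rewrite addnS halt; last by apply/andP; split; lia.
by case: (inT (j + d)) IH' => /= IH'; rewrite exprS -mulrA -IH'; ring.
Qed.

Lemma ss j : s j * s j = 1.
Proof. by rewrite /s; case: (inT j); ring. Qed.

Definition X j (w : k.-tuple bool) := s j * y j / pi p * ((Wj k w j)%:R - pi p).

Lemma EXX j q : (1 <= j)%N -> (j <= q)%N -> (q <= k)%N ->
  E (fun w => X j w * X q w) = y j * y q * p ^+ (q - j) / p.
Proof.
move=> h1 h2 h3.
have hp0 := p_neq0 hp. have hp1' := p1_neq0 hp.
have hpi : pi p != 0 by rewrite /pi mulf_neq0 // invr_neq0.
rewrite (@Exp_ext _ _ _ (fun w => X j w * X q w) (fun w => (s j * y j / pi p * (s q * y q / pi p)) *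
   (((Wj k w j)%:R - pi p) * ((Wj k w q)%:R - pi p)))); last by move=> w; rewrite /X; ring.
rewrite ExpZ CovE //.
have hs : s q = (-1) ^+ (q - j) * s j.
  by have := @sign_shift (q - j)%N j h1; rewrite subnKC // => ->.
rewrite hs (exprNn p); set z := (-1) ^+ (q - j).
have hz : z * z = 1 by rewrite /z -exprMn mulrNN mulr1 expr1n.
have hsj := ss j.
transitivity ((s j * s j) * (z * z) * (y j * y q * p ^+ (q - j) * (1 - pi p) / pi p)).
  by field.
rewrite hsj hz !mul1r /pi; field; by rewrite hp0 hp1'.
Qed.


Lemma VarN n : (n <= k)%N ->
  E (fun w => (\sum_(1 <= j < n.+1) X j w) ^+ 2) =
  p^-1 * (\sum_(1 <= j < n.+1) y j ^+ 2) + 2 * (\sum_(1 <= j < n) y j * y j.+1) + 2 * Tn p y n.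
Proof.
have hp0 := p_neq0 hp.
elim: n => [|n IH] hn.
  rewrite (@Exp_ext _ _ _ _ (fun w => 0 * 1)); last by move=> w; rewrite big_geq // expr0n mul0r.
  rewrite ExpZ mul0r /Tn /= !big_geq //; ring.
rewrite (@Exp_ext _ _ _ _ (fun w => (\sum_(1 <= j < n.+1) X j w) ^+ 2 +
    (2 * \sum_(1 <= j < n.+1) (X j w * X n.+1 w) + X n.+1 w * X n.+1 w))); last first.
  by move=> w; rewrite big_nat_recr //= -mulr_suml; ring.
rewrite !ExpD ExpZ Exp_sum IH ?(ltnW hn) //.
rewrite EXX //.
rewrite subnn expr0.
rewrite (@eq_big_nat _ _ _ 1 n.+1 (fun i => E (fun w => X i w * X n.+1 w)) (fun j => y j * y n.+1 * p ^+ (n.+1 - j) / p)); last first.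
  by move=> j /andP[h1 h2] /=; rewrite EXX //; lia.
rewrite [X in _ = p^-1 * X + _ + _]big_nat_recr //=.
case: n IH hn => [|n] IH hn.
  rewrite /Tn /= !big_geq //; by field.
rewrite (@Tn_step _ p y n.+1) // [X in _ = _ + _ * X + _]big_nat_recr //= [X in _ + (_ * X + _) = _]big_nat_recr //=.
rewrite (@eq_big_nat _ _ _ 1 n.+1 (fun i => y i * y n.+2 * p ^+ (n.+2 - i) / p)
   (fun j => p ^+ (n.+2 - j - 1) * y j * y n.+2)); last first.
  move=> j /andP[h1 h2] /=; set e := (n.+2 - j - 1)%N.
  have -> : (n.+2 - j = e.+1)%N by rewrite /e; lia.
  by rewrite exprS; field.
have -> : (n.+2 - n.+1 = 1)%N by lia.
by rewrite expr1; field.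
Qed.

End Var.
Section Final.
Variable R : realFieldType.
Variable p : R.
Hypothesis hp : 0 < p.
Hypothesis hp1 : p < 1.
Variable k : nat.
Hypothesis hk : (0 < k)%N.
Variable inT : nat -> bool.
Variable y : nat -> R.
Hypothesis halt : forall j : nat, (1 <= j < k)%N -> inT j.+1 = ~~ inT j.

Notation E := (Exp R p k).

Lemma pi_neq0 : pi p != 0.
Proof. have h0 := p_neq0 hp; have h1 := p1_neq0 hp; by rewrite /pi mulf_neq0 // invr_neq0. Qed.

Lemma EGamma : E (Gamma_hat R p k inT y) = \sum_(1 <= j < k.+1) s R inT j * y j.
Proof.
rewrite /Gamma_hat Exp_sum; apply: eq_big_nat => j hj.
rewrite ExpZ (@Exp_ext _ _ _ _ (fun w => (y j / Pr1 R p k j) * (Wj k w j)%:R)); last first.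
  by move=> w; ring.
rewrite ExpZ -/(Pr1 R p k j) (Pr1E hp hk (_ : (1 <= j <= k)%N)); last by lia.
have := pi_neq0; rewrite /s => hpi; by field.
Qed.

Lemma VarG : Var R p k (Gamma_hat R p k inT y) =
  p^-1 * (\sum_(1 <= j < k.+1) y j ^+ 2) + 2 * (\sum_(1 <= j < k) y j * y j.+1) + 2 * Tn p y k.
Proof.
rewrite /Var EGamma -(@VarN R p hp hp1 k hk inT y halt k (leqnn k)); apply: Exp_ext => w.
rewrite /Gamma_hat -sumrB; congr (_ ^+ 2); apply: eq_big_nat => j hj.
rewrite (Pr1E hp hk (_ : (1 <= j <= k)%N)); last by lia.
have := pi_neq0; rewrite /X /s => hpi; by field.
Qed.


Lemma ET1 j c : (1 <= j <= k)%N -> E (fun w => (Wj k w j)%:R * c / Pr1 R p k j) = c.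
Proof.
move=> hj.
rewrite (@Exp_ext _ _ _ _ (fun w => (c / Pr1 R p k j) * (Wj k w j)%:R)); last by move=> w; ring.
rewrite ExpZ -/(Pr1 R p k j) (Pr1E hp hk hj).
have := pi_neq0 => hpi; by field.
Qed.

Lemma pos_d d : (1 < d)%N -> 0 < p + (- p) ^+ d.
Proof.
move=> hd.
have h1 : - (p ^+ d) <= (- p) ^+ d.
  by apply: lerNnormlW; rewrite normrX normrN gtr0_norm.
case: d hd h1 => [|d] // hd h1.
have h3 : p ^+ d < 1 by rewrite exprn_ilt1 ?(ltW hp) //; case: d hd {h1}.
have hp' := hp.
have h2 : p ^+ d.+1 < p by rewrite exprS; nra.
lra.
Qed.

Lemma Pr2_neq0 j q : (1 <= j)%N -> (j.+2 <= q)%N -> (q <= k)%N -> Pr2 R p k j q != 0.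
Proof.
move=> h1 h2 h3.
rewrite (Pr2E hp hk h1 (_ : (j < q)%N) h3); last by lia.
have hp0 := p_neq0 hp. have hp1' := p1_neq0 hp.
have -> : f p (q - j) true = (p + (- p) ^+ (q - j)) / (1 + p) by rewrite /f /pi /=; field.
rewrite mulf_neq0 ?pi_neq0 // mulf_neq0 ?invr_neq0 //.
by apply: lt0r_neq0; apply: pos_d; lia.
Qed.

Lemma ET2 j q c : (1 <= j)%N -> (j.+2 <= q)%N -> (q <= k)%N ->
  E (fun w => c * ((Wj k w j)%:R * (Wj k w q)%:R) / Pr2 R p k j q) = c.
Proof.
move=> h1 h2 h3.
rewrite (@Exp_ext _ _ _ _ (fun w => (c / Pr2 R p k j q) * (Wj k w j && Wj k w q)%:R)); last first.
  by move=> w; rewrite -natr_and; ring.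
rewrite ExpZ -/(Pr2 R p k j q).
have := Pr2_neq0 h1 h2 h3 => hpi; by field.
Qed.

Lemma Esig : E (sigma_hat R p k y) = sigma_tilde R p k y.
Proof.
rewrite /sigma_hat /sigma_tilde !ExpD !ExpZ !Exp_sum.
congr (_ * _ + _ + _ * _).
- apply: eq_big_nat => j hj; apply: ET1; lia.
- apply: eq_big_nat => j hj; apply: ET1; lia.
apply: eq_big_nat => j hj; rewrite Exp_sum; apply: eq_big_nat => q hq.
rewrite ExpZ ET2 ?mulrA //; lia.
Qed.

End Final.

Theorem proposition7 (R : realFieldType) (p : R) (k : nat)
    (inT : nat -> bool) (y : nat -> R) :
  0 < p -> p < 1 -> (0 < k)%N ->
  (forall j : nat, (1 <= j < k)%N -> inT j.+1 = ~~ inT j) ->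
  @Var R p k (@Gamma_hat R p k inT y) <= @sigma_tilde R p k y /\
  @Exp R p k (@sigma_hat R p k y) = @sigma_tilde R p k y.
Proof.
move=> hp hp1 hk halt; split; last exact: Esig.
rewrite (@VarG R p hp hp1 k hk inT y halt) /sigma_tilde -/(Tn p y k).
have := adj_ineq y hk.
lra.
Qed.
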